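(* Let $S=K[x_1,\ldots,x_n]$ and $i,j\in[\lfloor n/2\rfloor]$. Then (1) if $i\neq j$, then $W_i\cap W_j=\emptyset$; (2) if $I\in W_i$, then there is a subset $B\subseteq[n]$ with $|B|=i$ and $W_B\subseteq G(I)$, and the set $W_B$ is uniquely determined by $I$ (i.e. any two such subsets $B$ yield the same $W_B$).
   Context: $K$ is a field; $G(I)$ is the minimal monomial generating set. With $\sigma$ the bijection $x_{i_1}\cdots x_{i_k}\mapsto\{i_1,\ldots,i_k\}$, the facet complex $\delta_{\mathcal{F}}(I)$ has facets $\sigma(g)$, $g\in G(I)$, the Stanley–Reisner complex is $\delta_{\mathcal{N}}(I)=\{\sigma(g)\mid g\text{ square-free monomial},\ g\notin I\}$, and a square-free monomial ideal $I$ is an $f$-ideal if both have the same $f$-vector. For a nonempty proper $B\subset[n]$ with complement $\overline B$, $W_B=\{x_ix_j\mid i\ne j,\ i,j\in B\text{ or } i,j\in\overline B\}$. An $f$-ideal $I$ whose $G(I)$ consists of square-free monomials of degree 2 is of $l$ type if $W_B\subseteq G(I)$ for some $B$ with $|B|=l$; $W_l$ is the set of $f$-ideals of $S$ of $l$ type. *)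

(* Defs.v *)
From mathcomp Require Import all_boot.
Set Implicit Arguments. Unset Strict Implicit. Unset Printing Implicit Defensive.

(* A square-free monomial x_{i1}...x_{ik} of S = K[x_1..x_n] is identified,
   via sigma, with the subset {i1..ik} of [n] (here 'I_n).  A square-free
   monomial ideal I is determined by the set of square-free monomials it
   contains, which is an up-closed family U of subsets of [n]. *)
Section Defs.
Variable n : nat.
Notation sset := {set 'I_n}.

Definition sqfree_monomial_ideal (U : {set sset}) : Prop :=
  forall A B : sset, A \in U -> A \subset B -> B \in U.

Definition mingens (U : {set sset}) : {set sset} :=
  [set A in U | [forall B in U, (B \subset A) ==> (B == A)]].

Definition facet_complex (U : {set sset}) : {set sset} :=
  [set F : sset | [exists g in mingens U, F \subset g]].

Definition SR_complex (U : {set sset}) : {set sset} := ~: U.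

(* number of (k-1)-dimensional faces *)
Definition nfaces (D : {set sset}) (k : nat) : nat := #|[set F in D | #|F| == k]|.

Definition f_ideal (U : {set sset}) : Prop :=
  sqfree_monomial_ideal U /\
  forall k, 0 < k -> nfaces (facet_complex U) k = nfaces (SR_complex U) k.

Definition WB (B : sset) : {set sset} :=
  [set [set x; y] | x in B, y in B & x != y] :|:
  [set [set x; y] | x in ~: B, y in ~: B & x != y].

Definition deg2_gens (U : {set sset}) : Prop :=
  forall g, g \in mingens U -> #|g| = 2.

Definition in_W (l : nat) (U : {set sset}) : Prop :=
  [/\ f_ideal U, deg2_gens U &
   exists B : sset, [/\ B != set0, B != setT, #|B| = l & WB B \subset mingens U]].
End Defs.

(* Main.v *)
Require Import Defs.
From mathcomp Require Import all_boot zify.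
Set Implicit Arguments. Unset Strict Implicit. Unset Printing Implicit Defensive.


Definition ordQ n (Q : {set {set 'I_n}}) : {set 'I_n * 'I_n} :=
  [set p | (p.1 != p.2) && ([set p.1; p.2] \in Q)].

Lemma pair_eq2 n (x y a b : 'I_n) : x != y -> [set x; y] = [set a; b] ->
  (x = a /\ y = b) \/ (x = b /\ y = a).
Proof.
move=> nxy E.
have hx : x \in [set a; b] by rewrite -E set21.
have hy : y \in [set a; b] by rewrite -E set22.
have ha : a \in [set x; y] by rewrite E set21.
case/set2P: hx => Hx; case/set2P: hy => Hy; subst.
all: by [left|right|rewrite eqxx in nxy].
Qed.

Lemma fiber2 n (Q : {set {set 'I_n}}) F : F \in Q -> #|F| = 2 ->
  #|[set p | (p \in ordQ Q) && ([set p.1; p.2] == F)]| = 2.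
Proof.
move=> FQ /eqP /cards2P [a [b [nab EF]]]; subst F.
have -> : [set p | (p \in ordQ Q) && ([set p.1; p.2] == [set a; b])] = [set (a, b); (b, a)].
  apply/setP => [[x y]]; rewrite !inE /=.
  apply/idP/idP.
    case/andP => /andP [nxy _] /eqP E.
    case: (pair_eq2 nxy E) => [[-> ->]|[-> ->]]; by rewrite eqxx ?orbT.
  case/orP => /eqP [-> ->] /=.
    by rewrite nab FQ eqxx.
  by rewrite eq_sym nab setUC FQ eqxx.
rewrite cards2; suff : (a, b) != (b, a) by move=> ->.
by apply/negP => /eqP [E _]; rewrite E eqxx in nab.
Qed.

Lemma DC n (Q : {set {set 'I_n}}) :
  #|ordQ Q| = 2 * #|[set F in Q | #|F| == 2]|.
Proof.
rewrite -sum1_card (partition_big (fun p => [set p.1; p.2]) (mem [set F in Q | #|F| == 2])).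
  rewrite -sum1_card big_distrr /= muln1.
  apply: eq_bigr => F; rewrite inE => /andP [FQ /eqP F2].
  by rewrite sum1dep_card fiber2.
move=> [x y]; rewrite !inE /= => /andP [nxy ->]; by rewrite cards2 nxy.
Qed.

Lemma mingens_sub n (U : {set {set 'I_n}}) : mingens U \subset U.
Proof. by apply/subsetP => A; rewrite inE => /andP []. Qed.

Lemma faces2 n (U : {set {set 'I_n}}) : f_ideal U -> deg2_gens U ->
  #|mingens U| = #|[set F in ~: U | #|F| == 2]|.
Proof.
move=> [_ Hf] Hd.
have := Hf 2 isT; rewrite /nfaces /SR_complex => <-.
suff -> : [set F in facet_complex U | #|F| == 2] = mingens U by [].
apply/setP => F; rewrite /facet_complex [in LHS]inE [in LHS]inE.
apply/idP/idP; last first.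
  move=> FM; rewrite Hd // eqxx andbT.
  by apply/existsP; exists F; rewrite FM subxx.
case/andP => /existsP [g /andP [gM Fg]] /eqP F2.
suff -> : F = g by [].
by apply/eqP; rewrite eqEcard Fg F2 Hd.
Qed.

Lemma total n : #|[set p : 'I_n * 'I_n | p.1 != p.2]| = n * n - n.
Proof.
have H := cardsC [set p : 'I_n * 'I_n | p.1 != p.2].
have E : ~: [set p : 'I_n * 'I_n | p.1 != p.2] = [set (x, x) | x in 'I_n].
  apply/setP => [[x y]]; rewrite !inE /= negbK.
  apply/eqP/imsetP => [->|[z _ [-> ->]]] //; by exists y.
rewrite E card_imset in H; last by move=> a b [].
rewrite card_prod card_ord in H.
lia.
Qed.

Lemma key_ineq n (U : {set {set 'I_n}}) : f_ideal U -> deg2_gens U ->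
  n * n - n <= 2 * #|ordQ (~: mingens U)|.
Proof.
move=> Hf Hd.
set M := mingens U.
have E1 : #|ordQ M| = 2 * #|M|.
  rewrite DC; suff -> : [set F in M | #|F| == 2] = M by [].
  apply/setP => F; rewrite [in LHS]inE.
  case FM : (F \in M) => //=; by rewrite Hd // eqxx.
have E2 : #|ordQ (~: U)| = 2 * #|M| by rewrite DC -faces2.
have S1 : ordQ (~: U) \subset ordQ (~: M).
  apply/subsetP => p; rewrite /ordQ !in_set => /andP [-> /=].
  by apply: contra => /andP [].
have P : #|[set p : 'I_n * 'I_n | p.1 != p.2]| = #|ordQ M| + #|ordQ (~: M)|.
  rewrite -(cardsID [set p | [set p.1; p.2] \in M]).
  congr (_ + _); apply: eq_card => p; rewrite !inE //; exact: andbC.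
have := subset_leq_card S1.
rewrite total in P. lia.
Qed.

Lemma wb_mem n (B : {set 'I_n}) x y : x != y -> (x \in B) = (y \in B) ->
  [set x; y] \in WB B.
Proof.
move=> nxy E; rewrite /WB in_setU.
case xB : (x \in B).
  apply/orP; left; apply/imset2P; exists x y => //; by rewrite inE -E xB.
apply/orP; right; apply/imset2P; exists x y => //; rewrite ?inE ?xB //.
by rewrite -E xB.
Qed.

Lemma crossing n (M : {set {set 'I_n}}) (B B' : {set 'I_n}) :
  WB B \subset M -> WB B' \subset M ->
  ordQ (~: M) \subset
  setX (B :&: B') (~: (B :|: B')) :|: setX (~: (B :|: B')) (B :&: B') :|:
  (setX (B :\: B') (B' :\: B) :|: setX (B' :\: B) (B :\: B')).
Proof.
move=> H1 H2; apply/subsetP => [[x y]]; rewrite /ordQ !inE /= => /andP [nxy nM].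
have c1 : (x \in B) != (y \in B).
  apply/negP => /eqP E; move/negP: nM; apply; exact: (subsetP H1 _ (wb_mem nxy E)).
have c2 : (x \in B') != (y \in B').
  apply/negP => /eqP E; move/negP: nM; apply; exact: (subsetP H2 _ (wb_mem nxy E)).
move: c1 c2; by case: (x \in B); case: (y \in B); case: (x \in B'); case: (y \in B').
Qed.

Lemma cross_card n (M : {set {set 'I_n}}) (B B' : {set 'I_n}) :
  WB B \subset M -> WB B' \subset M ->
  #|ordQ (~: M)| <= 2 * (#|B :&: B'| * #|~: (B :|: B')| + #|B :\: B'| * #|B' :\: B|).
Proof.
move=> H1 H2; have := subset_leq_card (crossing H1 H2).

have h1 := (leq_card_setU (setX (B :&: B') (~: (B :|: B')) :|: setX (~: (B :|: B')) (B :&: B'))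
  (setX (B :\: B') (B' :\: B) :|: setX (B' :\: B) (B :\: B'))).1.
have h2 := (leq_card_setU (setX (B :&: B') (~: (B :|: B'))) (setX (~: (B :|: B')) (B :&: B'))).1.
have h3 := (leq_card_setU (setX (B :\: B') (B' :\: B)) (setX (B' :\: B) (B :\: B'))).1.
rewrite !cardsX in h2 h3.
move=> h; rewrite [#|~: _| * _]mulnC [#|B' :\: B| * _]mulnC in h2 h3; rewrite mul2n -addnn; rewrite addnACA; exact: (leq_trans h (leq_trans h1 (leq_add h2 h3))).
Qed.

Lemma cells n (B B' : {set 'I_n}) :
  n = #|B :&: B'| + #|B :\: B'| + #|B' :\: B| + #|~: (B :|: B')|.
Proof.
have h1 := cardsID B' B.
have h2 := cardsID B' (~: B).
have h3 := cardsC B.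
have e1 : ~: B :&: B' = B' :\: B by rewrite setDE setIC.
have e2 : ~: B :\: B' = ~: (B :|: B') by rewrite setDE setCU.
rewrite e1 e2 card_ord in h2 h3 *. lia.
Qed.
Lemma arith a b c d : (a+b+c+d) * (a+b+c+d) - (a+b+c+d) <= 2 * (2 * (a*d+b*c)) ->
  a + d = 0 \/ b + c = 0 \/ (a + d = 1 /\ b + c = 1).
Proof.
move=> H.
have h1 : 4*(a*d) <= (a+d)*(a+d).
  have : 0 <= (a - d) * (a - d) by [].
  case: (leqP a d) => ?; nia.
have h2 : 4*(b*c) <= (b+c)*(b+c).
  case: (leqP b c) => ?; nia.
have H2 : 2 * ((a+d)*(b+c)) <= (a+d) + (b+c).
  move: H h1 h2. set x := a + d. set y := b + c.
  have -> : a+b+c+d = x + y by rewrite /x /y; lia.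
  move: (a*d) (b*c) => p q. nia.
move: H2; set x := a + d; set y := b + c.
case: x => [|x]; [by left|]; case: y => [|y]; [by right; left|].
move=> H2; right; right; nia.
Qed.

Lemma core n (U : {set {set 'I_n}}) (B B' : {set 'I_n}) :
  f_ideal U -> deg2_gens U -> WB B \subset mingens U -> WB B' \subset mingens U ->
  [\/ B' = B, B' = ~: B | n = 2].
Proof.
move=> Hf Hd H1 H2.
have k := key_ineq Hf Hd.
have c := cross_card H1 H2.
have e := cells B B'.
have := arith (a:=#|B :&: B'|) (b:=#|B :\: B'|) (c:=#|B' :\: B|) (d:=#|~: (B :|: B')|).
rewrite -e => /(_ (leq_trans k (leq_mul (leqnn 2) c))).
case=> [h|[h|[h h']]]; last by constructor 3; lia.
- have E2 : #|B :&: B'| == 0 by apply/eqP; lia.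
  have E1 : #|~: (B :|: B')| == 0 by apply/eqP; lia.
  rewrite cards_eq0 in E1; rewrite cards_eq0 in E2; move/eqP: E1 => E1; move/eqP: E2 => E2.
  constructor 2; apply/setP => x; rewrite inE.
  case xB : (x \in B); case xB' : (x \in B') => //.
    have : x \in B :&: B' by rewrite inE xB xB'.
    by rewrite E2 inE.
  have : x \in ~: (B :|: B') by rewrite !inE xB xB'.
  by rewrite E1 inE.
- have s1 : #|B :\: B'| == 0 by apply/eqP; lia.
  have s2 : #|B' :\: B| == 0 by apply/eqP; lia.
  rewrite cards_eq0 setD_eq0 in s1; rewrite cards_eq0 setD_eq0 in s2.
  by constructor 1; apply/eqP; rewrite eqEsubset s1 s2.
Qed.

Lemma WB_C n (B : {set 'I_n}) : WB (~: B) = WB B.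
Proof. by rewrite /WB setCK setUC. Qed.

Lemma WB_part0 n (B : {set 'I_n}) : #|B| <= 1 ->
  [set [set x; y] | x in B, y in B & x != y] = set0.
Proof.
move=> hB; apply/eqP; rewrite -subset0; apply/subsetP => F /imset2P [x y xB].
rewrite inE => /andP [yB nxy] _.
have : #|[set x; y]| <= #|B|.
  by apply: subset_leq_card; apply/subsetP => z /set2P [->|->].
by rewrite cards2 nxy; move=> h; have := leq_trans h hB.
Qed.

Lemma WB_small n (B : {set 'I_n}) : #|B| <= 1 -> #|~: B| <= 1 -> WB B = set0.
Proof.
move=> h1 h2; rewrite /WB WB_part0 //.
have := WB_part0 h2; move=> ->; by rewrite setU0.
Qed.

Theorem proposition4p10 (n i j : nat) :
  0 < i <= n./2 -> 0 < j <= n./2 ->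
  (i != j -> forall U : {set {set 'I_n}}, ~ (in_W i U /\ in_W j U)) /\
  (forall U : {set {set 'I_n}}, in_W i U ->
     (exists B : {set 'I_n}, #|B| = i /\ WB B \subset mingens U) /\
     (forall B1 B2 : {set 'I_n}, #|B1| = i -> #|B2| = i ->
        WB B1 \subset mingens U -> WB B2 \subset mingens U -> WB B1 = WB B2)).
Proof.
move=> /andP [i0 hi] /andP [j0 hj].
move: hi hj; rewrite -!divn2 => hi hj.
split.
  move=> nij U [[Hf Hd [B [_ _ cB sB]]] [_ _ [B' [_ _ cB' sB']]]].
  have hc := cardsC B; rewrite card_ord in hc.
  case: (core Hf Hd sB sB') => [E|E|E]; subst.
  - by rewrite eqxx in nij.
  - move/eqP: nij; apply; lia.
  - move/eqP: nij; apply; lia.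
move=> U [Hf Hd [B [_ _ cB sB]]].
split; first by exists B.
move=> B1 B2 c1 c2 s1 s2.
case: (core Hf Hd s1 s2) => [->|->|E]; first by [].
  by rewrite WB_C.
have h1 := cardsC B1; have h2 := cardsC B2; rewrite card_ord in h1 h2.
subst n.
by rewrite !WB_small //; lia.
Qed.
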